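(* Let $X$ be a set and $\sqsubseteq$ a binary relation on pairs of finite subsets of $X$ satisfying ($\iota_0$)–($\iota_4$). For finite $a\subseteq X$ define $$\mathrm{conv}_{\mathcal L}(a)=\{p\in X:\{p\}\sqsubseteq a\},\qquad \mathrm{conv}_{\mathcal U}(a)=\{p\in X: a\sqsubseteq\{p\}\},$$ and let $\mathcal L$ (resp. $\mathcal U$) be the family of all $A\subseteq X$ such that $\mathrm{conv}_{\mathcal L}(a)\subseteq A$ (resp. $\mathrm{conv}_{\mathcal U}(a)\subseteq A$) for every finite $a\subseteq A$. Then $(X,\mathcal L,\mathcal U)$ is a normal bi-convexity space satisfying, for all finite $a,b\subseteq X$, $$a\sqsubseteq b\iff \mathrm{conv}_{\mathcal U}(a)\cap\mathrm{conv}_{\mathcal L}(b)\neq\emptyset.$$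
   Context: Axioms for a relation $\sqsubseteq$ on pairs of finite subsets of $X$ ($a,b,a',b',a_i,b_i$ finite, $p,q\in X$): ($\iota_0$) $\emptyset\not\sqsubseteq\emptyset$; ($\iota_1$) $a\sqsubseteq b$, $a\subseteq a'$, $b\subseteq b'$ imply $a'\sqsubseteq b'$; ($\iota_2$) $\{p\}\sqsubseteq\{q\}$ and $\{q\}\sqsubseteq\{p\}$ hold iff $p=q$; ($\iota_3$) $(a_0\cup\{p\})\sqsubseteq b_0$ and $a_1\sqsubseteq(b_1\cup\{p\})$ imply $(a_0\cup a_1)\sqsubseteq(b_0\cup b_1)$; ($\iota_4$) if $a\sqsubseteq b$ then there is $p\in X$ with $a\sqsubseteq\{p\}$ and $\{p\}\sqsubseteq b$. A convexity on $X$ is a family of subsets of $X$ closed under arbitrary intersections (so $X$ belongs to it) and unions of chains; $\mathrm{conv}(A)$ is the intersection of all convex sets containing $A$. A bi-convexity space $(X,\mathcal L,\mathcal U)$ consists of two convexities on $X$. It is normal if (N1) for all $x\neq y$ in $X$, either $\mathrm{conv}_{\mathcal L}\{x\}\cap\mathrm{conv}_{\mathcal U}\{y\}=\emptyset$ or $\mathrm{conv}_{\mathcal U}\{x\}\cap\mathrm{conv}_{\mathcal L}\{y\}=\emptyset$; and (N2) for all disjoint $A\in\mathcal L$, $B\in\mathcal U$ there is $H\in\mathcal U$ with $X\setminus H\in\mathcal L$, $B\subseteq H$ and $A\cap H=\emptyset$. *)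

(* Defs.v *)
From mathcomp Require Import all_boot.
From mathcomp Require Import boolp classical_sets cardinality.
Set Implicit Arguments. Unset Strict Implicit. Unset Printing Implicit Defensive.
Local Open Scope classical_set_scope.

Section BiConvexity.
Variable X : Type.

(* A convexity: closed under arbitrary intersections (the empty intersection
   gives setT) and under unions of nonempty chains. *)
Definition convexity (C : set (set X)) : Prop :=
  (forall F : set (set X), F `<=` C -> C (\bigcap_(A in F) A)) /\
  (forall F : set (set X), F `<=` C -> F !=set0 ->
     (forall A B, F A -> F B -> A `<=` B \/ B `<=` A) ->
     C (\bigcup_(A in F) A)).

Definition hull (C : set (set X)) (A : set X) : set X :=
  \bigcap_(B in [set B | C B /\ A `<=` B]) B.

Definition normal_biconvexity (L U : set (set X)) : Prop :=
  [/\ convexity L, convexity U,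
      (forall x y : X, x <> y ->
         hull L [set x] `&` hull U [set y] = set0 \/
         hull U [set x] `&` hull L [set y] = set0)
    & (forall A B : set X, L A -> U B -> A `&` B = set0 ->
         exists H : set X, [/\ U H, L (~` H), B `<=` H & A `&` H = set0])].

(* The relation is given on all subsets, but only its values on pairs of
   finite subsets matter; the axioms quantify over finite subsets only. *)
Definition iota_axioms (R : set X -> set X -> Prop) : Prop :=
  [/\ ~ R set0 set0,
      (forall a b a' b', finite_set a -> finite_set b -> finite_set a' ->
         finite_set b' -> R a b -> a `<=` a' -> b `<=` b' -> R a' b'),
      (forall p q : X, (R [set p] [set q] /\ R [set q] [set p]) <-> p = q),
      (forall (a0 b0 a1 b1 : set X) (p : X), finite_set a0 -> finite_set b0 ->
         finite_set a1 -> finite_set b1 ->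
         R (a0 `|` [set p]) b0 -> R a1 (b1 `|` [set p]) ->
         R (a0 `|` a1) (b0 `|` b1))
    & (forall a b, finite_set a -> finite_set b -> R a b ->
         exists p : X, R a [set p] /\ R [set p] b)].

Definition convL (R : set X -> set X -> Prop) (a : set X) : set X :=
  [set p | R [set p] a].
Definition convU (R : set X -> set X -> Prop) (a : set X) : set X :=
  [set p | R a [set p]].

Definition familyL (R : set X -> set X -> Prop) : set (set X) :=
  [set A | forall a, finite_set a -> a `<=` A -> convL R a `<=` A].
Definition familyU (R : set X -> set X -> Prop) : set (set X) :=
  [set A | forall a, finite_set a -> a `<=` A -> convU R a `<=` A].

End BiConvexity.

(* Main.v *)
Require Import Defs.
From mathcomp Require Import all_boot.
From mathcomp Require Import boolp classical_sets cardinality.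
Local Open Scope classical_set_scope.

Lemma fin_ind (T : Type) (P : set T -> Prop) :
  P set0 -> (forall A x, finite_set A -> P A -> P (A `|` [set x])) ->
  forall A, finite_set A -> P A.
Proof.
elim/Peq: T P => T P P0 PS A /finite_seqP[s ->].
elim: s => [|x s IH]; first by rewrite set_nil.
have -> : [set` (x :: s)] = [set` s] `|` [set x].
  apply/seteqP; split=> y /=; rewrite inE.
    by case/orP=> [/eqP->|]; [right|left].
  by case=> [->|->]; rewrite ?eqxx ?orbT.
by apply: PS => //; apply: finite_seq.
Qed.

Lemma finU T (A B : set T) : finite_set A -> finite_set B -> finite_set (A `|` B).
Proof. by move=> fa fb; rewrite finite_setU. Qed.
Arguments finU {T A B}.

Local Hint Resolve finite_set1 : core.

Lemma Rrefl X (R : set X -> set X -> Prop) : iota_axioms R -> forall p, R [set p] [set p].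
Proof. by case=> _ _ H2 _ _ p; have [_ /(_ erefl) []] := H2 p p. Qed.
Arguments Rrefl {X R}.

Lemma Rmono X (R : set X -> set X -> Prop) : iota_axioms R -> forall a b a' b',
  finite_set a' -> finite_set b' -> R a b -> a `<=` a' -> b `<=` b' -> R a' b'.
Proof.
case=> _ H1 _ _ _ a b a' b' fa' fb' Rab aa bb.
by apply: (H1 a b) => //; [exact: sub_finite_set aa fa'|exact: sub_finite_set bb fb'].
Qed.
Arguments Rmono {X R}.

Lemma Rtrans X (R : set X -> set X -> Prop) : iota_axioms R -> forall a b p,
  finite_set a -> finite_set b -> R a [set p] -> R [set p] b -> R a b.
Proof.
move=> HR; case: (HR) => _ _ _ H3 _ a b p fa fb Rap Rpb.
have := H3 set0 b a set0 p (finite_set0 _) fb fa (finite_set0 _).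
rewrite !set0U setU0 => /(_ Rpb Rap) //.
Qed.
Arguments Rtrans {X R}.

Lemma Rmeet X (R : set X -> set X -> Prop) : iota_axioms R -> forall a b p,
  finite_set a -> finite_set b -> a p -> b p -> R a b.
Proof.
move=> HR a b p fa fb ap bp; apply: (Rmono HR _ _ _ _ fa fb (Rrefl HR p)) => y ->//.
Qed.
Arguments Rmeet {X R}.

Lemma cutL X (R : set X -> set X -> Prop) : iota_axioms R -> forall a,
  finite_set a -> forall c, finite_set c -> forall d e, finite_set d -> finite_set e ->
  c `<=` convL R a -> R d (e `|` c) -> R d (e `|` a).
Proof.
move=> HR a fa; case: (HR) => _ _ _ H3 _.
apply: fin_ind => [|c x fc IH] d e fd fe.
  by rewrite setU0 => _ Rde; apply: (Rmono HR _ _ _ _ fd (finU fe fa) Rde) => // y; left.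
move=> cxa Rd.
have Rxa : R [set x] a by apply: cxa; right.
have Rd2 : R d (a `|` (e `|` c)).
  have := H3 set0 a d (e `|` c) x (finite_set0 _) fa fd (finU fe fc).
  by rewrite !set0U -setUA; apply.
have : R d ((e `|` a) `|` c).
  apply: (Rmono HR _ _ _ _ _ _ Rd2) => //; first by rewrite -setUA; do 2!apply: finU => //.
  by move=> y /=; tauto.
move/(IH d _ fd (finU fe fa) (fun y cy => cxa y (or_introl cy))).
by move=> H; apply: (Rmono HR _ _ _ _ fd (finU fe fa) H) => // y /=; tauto.
Qed.
Arguments cutL {X R}.

Lemma cutU X (R : set X -> set X -> Prop) : iota_axioms R -> forall a,
  finite_set a -> forall c, finite_set c -> forall d e, finite_set d -> finite_set e ->
  c `<=` convU R a -> R (e `|` c) d -> R (e `|` a) d.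
Proof.
move=> HR a fa; case: (HR) => _ _ _ H3 _.
apply: fin_ind => [|c x fc IH] d e fd fe.
  by rewrite setU0 => _ Rde; apply: (Rmono HR _ _ _ _ (finU fe fa) fd Rde) => // y; left.
move=> cxa Rd.
have Rxa : R a [set x] by apply: cxa; right.
have Rd2 : R (e `|` c `|` a) d.
  have := H3 (e `|` c) d a set0 x (finU fe fc) fd fa (finite_set0 _).
  by rewrite !set0U !setU0 -setUA; apply.
have : R ((e `|` a) `|` c) d.
  apply: (Rmono HR _ _ _ _ _ _ Rd2) => //; first by rewrite -setUA; do 2!apply: finU => //.
  by move=> y /=; tauto.
move/(IH d _ fd (finU fe fa) (fun y cy => cxa y (or_introl cy))).
by move=> H; apply: (Rmono HR _ _ _ _ (finU fe fa) fd H) => // y /=; tauto.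
Qed.
Arguments cutU {X R}.


Lemma chain_fin T Y (F : set (set T)) (Q : set T -> set Y) : F !=set0 ->
  (forall A B, F A -> F B -> A `<=` B \/ B `<=` A) ->
  (forall S1 S2, S1 `<=` S2 -> Q S1 `<=` Q S2) ->
  forall u, finite_set u -> u `<=` \bigcup_(S in F) Q S -> exists S, F S /\ u `<=` Q S.
Proof.
move=> [S0 FS0] ch Qm; apply: fin_ind => [|u x fu IH] sub.
  by exists S0; split => // y.
have [S [FS uS]] := IH (fun y uy => sub y (or_introl uy)).
have [S' FS' QS'x] := sub x (or_intror erefl).
have [SS'|S'S] := ch S S' FS FS'.
  exists S'; split => // y [uy|->] //; exact: Qm SS' _ (uS _ uy).
exists S; split => // y [uy|->]; [exact: uS|exact: Qm S'S _ QS'x].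
Qed.

Lemma convL_fam X (R : set X -> set X -> Prop) : iota_axioms R -> forall a,
  finite_set a -> familyL R (convL R a).
Proof.
move=> HR a fa c fc sc q Rqc.
have := cutL HR a fa c fc [set q] set0 (finite_set1 _) (finite_set0 _) sc.
by rewrite !set0U; apply.
Qed.
Arguments convL_fam {X R}.

Lemma convU_fam X (R : set X -> set X -> Prop) : iota_axioms R -> forall a,
  finite_set a -> familyU R (convU R a).
Proof.
move=> HR a fa c fc sc q Rqc.
have := cutU HR a fa c fc [set q] set0 (finite_set1 _) (finite_set0 _) sc.
by rewrite !set0U; apply.
Qed.
Arguments convU_fam {X R}.

Lemma hullL X (R : set X -> set X -> Prop) : iota_axioms R -> forall a,
  finite_set a -> hull (familyL R) a `<=` convL R a.
Proof.
move=> HR a fa y; apply; split; first exact: convL_fam.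
by move=> z az; apply: (Rmeet HR _ _ z) => //; exact: finite_set1.
Qed.
Arguments hullL {X R}.

Lemma hullU X (R : set X -> set X -> Prop) : iota_axioms R -> forall a,
  finite_set a -> hull (familyU R) a `<=` convU R a.
Proof.
move=> HR a fa y; apply; split; first exact: convU_fam.
by move=> z az; apply: (Rmeet HR _ _ z) => //; exact: finite_set1.
Qed.
Arguments hullU {X R}.

Lemma convexL X (R : set X -> set X -> Prop) : convexity (familyL R).
Proof.
split.
  move=> F FL a fa aF y ya A FA; apply: (FL A FA a fa) => // z az; exact: aF z az A FA.
move=> F FL F0 ch a fa aF y ya.
have [S [FS aS]] := chain_fin _ _ F id F0 ch (fun _ _ h => h) _ fa aF.
by exists S => //; apply: (FL S FS a fa aS).
Qed.
Arguments convexL {X R}.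

Lemma convexU X (R : set X -> set X -> Prop) : convexity (familyU R).
Proof.
split.
  move=> F FL a fa aF y ya A FA; apply: (FL A FA a fa) => // z az; exact: aF z az A FA.
move=> F FL F0 ch a fa aF y ya.
have [S [FS aS]] := chain_fin _ _ F id F0 ch (fun _ _ h => h) _ fa aF.
by exists S => //; apply: (FL S FS a fa aS).
Qed.
Arguments convexU {X R}.

Lemma N1 X (R : set X -> set X -> Prop) : iota_axioms R -> forall x y : X, x <> y ->
  hull (familyL R) [set x] `&` hull (familyU R) [set y] = set0 \/
  hull (familyU R) [set x] `&` hull (familyL R) [set y] = set0.
Proof.
move=> HR x y xy; have f1 := finite_set1.
case: (HR) => _ _ H2 _ _.
have [->|/set0P[z [zl zu]]] := eqVneq (hull (familyL R) [set x] `&` hull (familyU R) [set y]) set0.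
  by left.
right; apply/seteqP; split => // w [wu wl]; exfalso; apply: xy.
have := hullL HR _ (f1 _ _) z zl; have := hullU HR _ (f1 _ _) z zu.
have := hullU HR _ (f1 _ _) w wu; have := hullL HR _ (f1 _ _) w wl.
rewrite /convL /convU /= => Rwy Rxw Ryz Rzx.
apply/H2; split; [exact: (Rtrans HR _ _ w)|exact: (Rtrans HR _ _ z)].
Qed.
Arguments N1 {X R}.

Lemma charR X (R : set X -> set X -> Prop) : iota_axioms R -> forall a b : set X,
  finite_set a -> finite_set b -> (R a b <-> convU R a `&` convL R b !=set0).
Proof.
move=> HR a b fa fb; split.
  by case: (HR) => _ _ _ _ H4 /(H4 a b fa fb)[p [? ?]]; exists p.
by case=> p [? ?]; apply: (Rtrans HR _ _ p).
Qed.
Arguments charR {X R}.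

Definition goodp X (R : set X -> set X -> Prop) (U L : set X) : Prop :=
  ~ exists u l, [/\ finite_set u, finite_set l, u `<=` U, l `<=` L & R u l].
Arguments goodp {X}.

Lemma good_anti X (R : set X -> set X -> Prop) (U L U0 L0 : set X) :
  goodp R U L -> U0 `<=` U -> L0 `<=` L -> goodp R U0 L0.
Proof.
move=> g sU sL [u [l [fu fl su sl Rul]]]; apply: g; exists u, l; split => //.
- by move=> y /su /sU.
- by move=> y /sl /sL.
Qed.
Arguments good_anti {X R}.

Lemma sub_Dx X (u : set X) x : u `<=` (u `\` [set x]) `|` [set x].
Proof. by move=> y uy; have [->|yx] := pselect (y = x); [right|left]. Qed.

Lemma good_ext X (R : set X -> set X -> Prop) : iota_axioms R -> forall U L x,
  goodp R U L -> goodp R U (L `|` [set x]) \/ goodp R (U `|` [set x]) L.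
Proof.
move=> HR U L x g; have [g1|ng] := pselect (goodp R U (L `|` [set x])); first by left.
right => -[u2 [l2 [fu2 fl2 su2 sl2 R2]]]; apply: ng => -[u1 [l1 [fu1 fl1 su1 sl1 R1]]].
case: (HR) => _ _ _ H3 _.
have fu2' := finite_setD [set x] fu2; have fl1' := finite_setD [set x] fl1.
apply: g; exists ((u2 `\` [set x]) `|` u1), (l2 `|` (l1 `\` [set x])); split.
- exact: finU.
- exact: finU.
- move=> y [[/su2 [//|->] /=]|/su1 //]; by [].
- move=> y [/sl2 //|[/sl1 [//|->] /=]]; by [].
apply: (H3 _ _ _ _ x) => //.
  exact: (Rmono HR _ _ _ _ (finU fu2' (finite_set1 _)) fl2 R2 (@sub_Dx _ _ _)).
exact: (Rmono HR _ _ _ _ fu1 (finU fl1' (finite_set1 _)) R1 _ (@sub_Dx _ _ _)).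
Qed.
Arguments good_ext {X R}.

Lemma init_good X (R : set X -> set X -> Prop) : iota_axioms R -> forall A B,
  familyL R A -> familyU R B -> A `&` B = set0 -> goodp R B A.
Proof.
move=> HR A B LA UB AB [u [l [fu fl su sl Rul]]].
have /(charR HR _ _ fu fl) [p [up lp]] := Rul.
have Bp : B p := UB u fu su p up.
have Ap : A p := LA l fl sl p lp.
by have : (A `&` B) p by []; rewrite AB.
Qed.
Arguments init_good {X R}.

Definition SUp X (S : set (bool * X)) : set X := [set x | S (true, x)].
Definition SLp X (S : set (bool * X)) : set X := [set x | S (false, x)].
Arguments SUp {X}. Arguments SLp {X}.

Lemma N2 X (R : set X -> set X -> Prop) : iota_axioms R -> forall A B : set X,
  familyL R A -> familyU R B -> A `&` B = set0 ->
  exists H : set X, [/\ familyU R H, familyL R (~` H), B `<=` H & A `&` H = set0].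
Proof.
move=> HR A B LA UB AB.
pose base := [set z : bool * X | if z.1 then B z.2 else A z.2].
pose P := [set S | goodp R (SUp (S `|` base)) (SLp (S `|` base))].
have g0 := init_good HR A B LA UB AB.
have monU S1 S2 : S1 `<=` S2 -> SUp (S1 `|` base) `<=` SUp (S2 `|` base).
  by move=> s12 y [h|h]; [left; apply: s12|right].
have monL S1 S2 : S1 `<=` S2 -> SLp (S1 `|` base) `<=` SLp (S2 `|` base).
  by move=> s12 y [h|h]; [left; apply: s12|right].
have [A0 [PA0 maxA0]] : exists A0, P A0 /\ forall S, A0 `<` S -> ~ P S.
  apply: Zorn_bigcup => F FP tot.
  have [[S0 FS0]|nF] := pselect (F !=set0); last first.
    apply: (good_anti _ _ _ _ g0).
      move=> y [[S FS _]|//]; by exfalso; apply: nF; exists S.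
    move=> y [[S FS _]|//]; by exfalso; apply: nF; exists S.
  move=> [u [l [fu fl su sl Rul]]].
  have ch : forall S1 S2, F S1 -> F S2 -> S1 `<=` S2 \/ S2 `<=` S1 by exact: tot.
  have [S1 [FS1 uS1]] := chain_fin _ _ F (fun S => SUp (S `|` base)) (ex_intro _ S0 FS0)
     ch monU u fu (fun y uy => match su y uy with
        | or_introl (ex_intro2 S3 FS Sy) => ex_intro2 _ _ S3 FS (or_introl Sy)
        | or_intror b => ex_intro2 _ _ S0 FS0 (or_intror b) end).
  have [S2 [FS2 lS2]] := chain_fin _ _ F (fun S => SLp (S `|` base)) (ex_intro _ S0 FS0)
     ch monL l fl (fun y ly => match sl y ly with
        | or_introl (ex_intro2 S3 FS Sy) => ex_intro2 _ _ S3 FS (or_introl Sy)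
        | or_intror b => ex_intro2 _ _ S0 FS0 (or_intror b) end).
  have [s12|s21] := ch S1 S2 FS1 FS2.
    apply: (FP S2 FS2); exists u, l; split => //.
    by move=> y /uS1; apply: monU.
  apply: (FP S1 FS1); exists u, l; split => //.
  by move=> y /lS2; apply: monL.
pose M := A0 `|` base.
have cov x : SUp M x \/ SLp M x.
  apply: contrapT => /not_orP[nU nL].
  have nP1 : ~ goodp R (SUp M) (SLp M `|` [set x]).
    move=> g; apply: (maxA0 (A0 `|` [set (false, x)])).
      split; first by move=> z; left.
      by move=> /(_ (false, x) (or_intror erefl)) h; apply: nL; left.
    apply: (good_anti _ _ _ _ g).
      move=> y; rewrite /SUp /M /= => -[[h|h]|h]; [by left|by case: h|by right].
    move=> y; rewrite /SLp /M /= => -[[h|h]|h]; [by left; left|by case: h => ->; right|by left; right].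
  have nP2 : ~ goodp R (SUp M `|` [set x]) (SLp M).
    move=> g; apply: (maxA0 (A0 `|` [set (true, x)])).
      split; first by move=> z; left.
      by move=> /(_ (true, x) (or_intror erefl)) h; apply: nU; left.
    apply: (good_anti _ _ _ _ g).
      move=> y; rewrite /SUp /M /= => -[[h|h]|h]; [by left; left|by case: h => ->; right|by left; right].
    move=> y; rewrite /SLp /M /= => -[[h|h]|h]; [by left|by case: h|by right].
  by have [] := good_ext HR _ _ x PA0.
have f1 := finite_set1.
exists (SUp M); split.
- move=> b fb sb p Rbp; have [//|Lp] := cov p; exfalso.
  by apply: PA0; exists b, [set p]; split => //; try exact: f1; move=> y ->.
- move=> a fa sa p Rpa Hp; apply: PA0; exists [set p], a; split => //; try exact: f1.
    by move=> y ->.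
  by move=> y /sa ay; have [//|] := cov y.
- by move=> y By; right.
- apply/seteqP; split => // y [Ay Hy]; apply: PA0; exists [set y], [set y]; split => //; try exact: f1.
  + by move=> z ->.
  + by move=> z ->; right.
  + exact: Rrefl HR y.
Qed.
Arguments N2 {X R}.

Theorem mainTheorem10 (X : Type) (R : set X -> set X -> Prop) :
  iota_axioms R ->
  normal_biconvexity (familyL R) (familyU R) /\
  (forall a b : set X, finite_set a -> finite_set b ->
     (R a b <-> convU R a `&` convL R b !=set0)).
Proof.
move=> HR; split; last exact: charR HR.
split; [exact: convexL|exact: convexU|exact: N1 HR|exact: N2 HR].
Qed.
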